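(* Let $\mathscr{S}=(T,S,\sigma,\mu,\tau_T,\tau_S)$ be a relaxed scenario. If $G_{=}(\mathscr{S})$ contains an induced path $a-b-c-d$ on four vertices, then either ($ad\in E(G_{<}(\mathscr{S}))$ and $ac,bd\in E(G_{>}(\mathscr{S}))$) or ($ad\in E(G_{>}(\mathscr{S}))$ and $ac,bd\in E(G_{<}(\mathscr{S}))$). In either case, both $\{a,b,d\}$ and $\{a,c,d\}$ are rainbow triangles.
   Context: All trees are planted phylogenetic trees: a tree $T$ has a distinguished vertex $0_T$ of degree $1$ whose unique neighbor $\rho_T$ is the root, and every vertex other than $0_T$ and the leaves $L(T)$ has at least two children. For $x,y\in V(T)$ write $y\preceq_T x$ if $x$ lies on the path from $0_T$ to $y$; edges are written $uv$ with $v\prec_T u$. $\mathrm{lca}_T$ denotes the last common ancestor. A time map for $T$ is $\tau_T\colon V(T)\to\mathbb{R}$ with $\tau_T(x)<\tau_T(y)$ whenever $x\prec_T y$. A relaxed scenario $\mathscr{S}=(T,S,\sigma,\mu,\tau_T,\tau_S)$ consists of a gene tree $T$ with time map $\tau_T$, a species tree $S$ with time map $\tau_S$, a map $\sigma\colon L(T)\to M$ with $M\subseteq L(S)$, and a map $\mu\colon V(T)\to V(S)\cup E(S)$ such that (S0) $\mu(x)=0_S$ iff $x=0_T$; (S1) $\mu(x)\in L(S)$ iff $x\in L(T)$, in which case $\mu(x)=\sigma(x)$; (S2) if $\mu(x)\in V(S)$ then $\tau_S(\mu(x))=\tau_T(x)$; (S3) if $\mu(x)=uv\in E(S)$ then $\tau_S(v)<\tau_T(x)<\tau_S(u)$.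 The graphs $G_{=}(\mathscr{S})$, $G_{<}(\mathscr{S})$, $G_{>}(\mathscr{S})$ have vertex set $L(T)$, and for distinct $x,y$ the pair $xy$ is an edge of $G_{=}(\mathscr{S})$, $G_{<}(\mathscr{S})$, resp. $G_{>}(\mathscr{S})$ iff $\tau_T(\mathrm{lca}_T(x,y))$ is $=$, $<$, resp. $>$ than $\tau_S(\mathrm{lca}_S(\sigma(x),\sigma(y)))$. A rainbow triangle is a set of three vertices whose three pairs lie in three different graphs among $G_{<}(\mathscr{S})$, $G_{=}(\mathscr{S})$, $G_{>}(\mathscr{S})$. *)

(* Defs.v *)
From HB Require Import structures.
From mathcomp Require Import all_boot all_order all_algebra.
From mathcomp Require Import reals.
Set Implicit Arguments. Unset Strict Implicit. Unset Printing Implicit Defensive.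
Import Order.TTheory GRing.Theory Num.Theory.
Local Open Scope ring_scope.

(* A planted tree on a finite vertex type V is encoded by its distinguished
   vertex [z] (= 0_T) and a parent map [par] with [par z = z]; the edges are
   the pairs (par v, v) for v <> z. *)

Section Trees.
Variable V : finType.
Variables (z : V) (par : V -> V).

(* y ⪯ x  (x lies on the path from 0 to y): x is reached from y by parents *)
Definition preceq (y x : V) : bool := fconnect par y x.
Definition prec (y x : V) : bool := preceq y x && (y != x).

Definition children (v : V) : {set V} := [set w | (w != z) && (par w == v)].

Definition is_leaf (v : V) : bool := (v != z) && (children v == set0).

(* planted phylogenetic tree: every vertex reaches 0 (so the parent graph is
   a tree rooted at 0), 0 has degree 1 (exactly one child, the root rho), and
   every vertex other than 0 and the leaves has at least two children. *)
Definition planted_phylo : Prop :=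
  [/\ par z = z,
      forall v, preceq v z,
      #|children z| = 1%N &
      forall v, v != z -> ~~ is_leaf v -> (2 <= #|children v|)%N].

Definition lca (x y : V) : V :=
  odflt z [pick w | [&& preceq x w, preceq y w &
                      [forall u, (preceq x u && preceq y u) ==> preceq w u]]].

Definition time_map (R : realType) (t : V -> R) : Prop :=
  forall x y, prec x y -> t x < t y.
End Trees.

(* image of mu: a vertex of S, or an edge of S; [OnE v] denotes the edge
   (par v, v) of S (requiring v <> 0_S). *)
Inductive vert_or_edge (V : Type) := OnV of V | OnE of V.

Section Scenario.
Variables (R : realType) (VT VS : finType).
Variables (zT : VT) (parT : VT -> VT) (zS : VS) (parS : VS -> VS).
Variables (sigma : VT -> VS) (mu : VT -> vert_or_edge VS).
Variables (tT : VT -> R) (tS : VS -> R).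

Definition relaxed_scenario : Prop :=
  planted_phylo zT parT /\ planted_phylo zS parS /\
  time_map parT tT /\ time_map parS tS /\
  (* sigma : L(T) -> M ⊆ L(S) (values off L(T) are irrelevant) *)
  (forall x, is_leaf zT parT x -> is_leaf zS parS (sigma x)) /\
  (forall x, mu x = OnV zS <-> x = zT) /\
  (forall x, (exists v, mu x = OnV v /\ is_leaf zS parS v) <-> is_leaf zT parT x) /\
  (forall x, is_leaf zT parT x -> mu x = OnV (sigma x)) /\
  (forall x v, mu x = OnV v -> tS v = tT x) /\
  (forall x v, mu x = OnE v -> v != zS /\ tS v < tT x < tS (parS v)).

Inductive graph_kind := GLt | GEq | GGt.

Definition cmp_kind (k : graph_kind) (a b : R) : bool :=
  match k with GLt => a < b | GEq => a == b | GGt => a > b end.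

Definition gedge (k : graph_kind) (x y : VT) : bool :=
  [&& is_leaf zT parT x, is_leaf zT parT y, x != y &
      cmp_kind k (tT (lca zT parT x y)) (tS (lca zS parS (sigma x) (sigma y)))].

Definition rainbow (x y w : VT) : Prop :=
  exists k1 k2 k3 : graph_kind,
    [/\ k1 <> k2, k1 <> k3, k2 <> k3 &
        [/\ gedge k1 x y, gedge k2 y w & gedge k3 x w]].

Definition induced_P4_eq (a b c d : VT) : Prop :=
  [/\ uniq [:: a; b; c; d],
      [/\ gedge GEq a b, gedge GEq b c & gedge GEq c d] &
      [/\ ~~ gedge GEq a c, ~~ gedge GEq b d & ~~ gedge GEq a d]].
End Scenario.

(* Main.v *)
Require Import Defs.
From mathcomp Require Import all_boot all_order all_algebra.
From mathcomp Require Import reals.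
Set Implicit Arguments. Unset Strict Implicit. Unset Printing Implicit Defensive.
Import Order.TTheory GRing.Theory Num.Theory.
Local Open Scope ring_scope.

Section TreeFacts.
Variable V : finType.
Variables (z : V) (par : V -> V).
Hypothesis Hroot : forall v, preceq par v z.

Lemma preceq_iter x n : preceq par x (iter n par x).
Proof. exact: fconnect_iter. Qed.

Lemma preceq_ex x y : preceq par x y -> exists n, y = iter n par x.
Proof. move=> H; exists (findex par x y); by rewrite iter_findex. Qed.

Lemma preceq_trans x y w : preceq par x y -> preceq par y w -> preceq par x w.
Proof. exact: connect_trans. Qed.

Lemma lca_ex x y : exists w, [&& preceq par x w, preceq par y w &
                      [forall u, (preceq par x u && preceq par y u) ==> preceq par w u]].
Proof.
have Hz : exists n, (fun n => preceq par y (iter n par x)) n.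
  have [n Hn] := preceq_ex (Hroot x); exists n => /=; rewrite -Hn; exact: Hroot.
case: (ex_minnP Hz) => k Hk Hmin.
exists (iter k par x); apply/and3P; split => //; first exact: preceq_iter.
apply/forallP => u; apply/implyP => /andP [Hxu Hyu].
have [j Hj] := preceq_ex Hxu.
have Hkj : (k <= j)%N by apply: Hmin; rewrite -Hj.
rewrite Hj -(subnK Hkj) iterD; exact: preceq_iter.
Qed.

Lemma lca_spec x y :
  [/\ preceq par x (lca z par x y), preceq par y (lca z par x y) &
      forall u, preceq par x u -> preceq par y u -> preceq par (lca z par x y) u].
Proof.
rewrite /lca; case: pickP => [w /and3P [H1 H2 /forallP H3] | H] /=.
  split => // u a b; have := H3 u; rewrite a b => /implyP; apply.
  by [].
have [w Hw] := lca_ex x y; by rewrite H in Hw.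
Qed.

Lemma chain y p q : preceq par y p -> preceq par y q ->
  preceq par p q \/ preceq par q p.
Proof.
move=> /preceq_ex [i ->] /preceq_ex [j ->].
case: (leqP i j) => Hij.
  left; rewrite -(subnK Hij) iterD; exact: preceq_iter.
right; rewrite -(subnK (ltnW Hij)) iterD; exact: preceq_iter.
Qed.

Variables (R : realType) (t : V -> R).
Hypothesis Ht : time_map par t.

Lemma time_le x y : preceq par x y -> t x <= t y.
Proof.
move=> H; case: (eqVneq x y) => [->|ne]; first by [].
apply: ltW; apply: Ht; by rewrite /prec H ne.
Qed.

Definition U x y := t (lca z par x y).

Lemma U_sym x y : U x y = U y x.
Proof.
rewrite /U; apply/le_anti/andP; split; apply: time_le.
  case: (lca_spec y x) => H1 H2 _; case: (lca_spec x y) => _ _ H3; exact: H3.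
case: (lca_spec x y) => H1 H2 _; case: (lca_spec y x) => _ _ H3; exact: H3.
Qed.

Lemma ultra x y w : U x w <= U x y \/ U x w <= U y w.
Proof.
rewrite /U.
case: (lca_spec x y) => Hx1 Hy1 _.
case: (lca_spec y w) => Hy2 Hw2 _.
case: (lca_spec x w) => _ _ H3.
case: (chain Hy1 Hy2) => H.
  right; apply: time_le; apply: H3; last by [].
  exact: preceq_trans Hx1 H.
left; apply: time_le; apply: H3; first by [].
exact: preceq_trans Hw2 H.
Qed.

Lemma twice x y w : U x y < U y w -> U x w = U y w.
Proof.
move=> H; apply/le_anti/andP; split.
  case: (ultra x y w) => // H'; exact: le_trans H' (ltW H).
case: (ultra y x w) => // H'; rewrite (U_sym y x) in H'.
by move: (lt_le_trans H H'); rewrite ltxx.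
Qed.
End TreeFacts.

Section Alg.
Variables (R : realType) (VT : Type) (u v : VT -> VT -> R).
Hypothesis Hu : forall x y w, u x y < u y w -> u x w = u y w.
Hypothesis Hv : forall x y w, v x y < v y w -> v x w = v y w.
Hypothesis Su : forall x y, u x y = u y x.
Hypothesis Sv : forall x y, v x y = v y x.

Lemma le_of x y w : u x y = u y w -> u x w <= u x y.
Proof.
move=> E; case: (leP (u x w) (u x y)) => // H.
have := @Hu y x w; rewrite Su H => /(_ isT) E2.
by move: H; rewrite E -E2 Su ltxx.
Qed.
End Alg.

Lemma half (R : realType) (VT : Type) (u v : VT -> VT -> R)
  (Hu : forall x y w, u x y < u y w -> u x w = u y w)
  (Hv : forall x y w, v x y < v y w -> v x w = v y w)
  (Su : forall x y, u x y = u y x)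
  (Sv : forall x y, v x y = v y x) a b c d :
  u a b = v a b -> u b c = v b c -> u c d = v c d ->
  u b d != v b d -> u a d != v a d -> u a c < v a c ->
  v a d < u a d /\ u b d < v b d.
Proof.
move=> Eab Ebc Ecd Nbd Nad Lac.
have E1 : u b c = u a b.
  case: (ltgtP (u a b) (u b c)) => // H.
    have h1 := Hu _ _ _ H; have h2 := Hv a b c; rewrite -Eab -Ebc in h2.
    by move: Lac; rewrite h1 (h2 H) ltxx.
  have H' : u c b < u b a by rewrite (Su c b) (Su b a).
  have h1 := Hu _ _ _ H'; have h2 := Hv c b a.
  rewrite (Sv c b) (Sv b a) (Sv c a) -Eab -Ebc in h2.
  by move: Lac; rewrite (Su a c) h1 (h2 H) (Su b a) ltxx.
have E2 : u c d = u b c.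
  case: (ltgtP (u b c) (u c d)) => // H.
    have h1 := Hu _ _ _ H; have h2 := Hv b c d; rewrite -Ebc -Ecd in h2.
    by move: Nbd; rewrite h1 (h2 H) eqxx.
  have H' : u d c < u c b by rewrite (Su d c) (Su c b).
  have h1 := Hu _ _ _ H'; have h2 := Hv d c b.
  rewrite (Sv d c) (Sv c b) (Sv d b) -Ebc -Ecd in h2.
  by move: Nbd; rewrite (Su b d) h1 (h2 H) (Su c b) eqxx.
set p := u a b in E1 E2.
have vacp : v a c <= p.
  rewrite /p Eab; apply: (le_of Hv Sv); by rewrite -Eab -Ebc.
have ubdp : u b d <= p.
  rewrite -E1; apply: (le_of Hu Su); by rewrite E2.
have ulp : u a c < u c d by rewrite E2 E1; exact: lt_le_trans Lac vacp.
have uadp : u a d = p by rewrite (Hu _ _ _ ulp) E2 E1.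
have vacp' : v a c = p.
  apply/eqP; rewrite eq_le vacp /=; case: leP => // H.
  have H' : v a c < v c d by rewrite -Ecd E2 E1.
  by move: Nad; rewrite (Hv _ _ _ H') -Ecd E2 E1 uadp eqxx.
have vadp : v a d <= p.
  rewrite -vacp'; apply: (le_of Hv Sv); by rewrite vacp' -Ecd E2 E1.
have Lad : v a d < u a d by rewrite uadp lt_neqAle vadp andbT -uadp eq_sym.
split => //.
case: (ltgtP (u b d) (v b d)) => // H.
  have vbdp : v b d < v a b by rewrite -Eab; exact: lt_le_trans H ubdp.
  have h := Hv d b a; rewrite (Sv d b) (Sv b a) (Sv d a) in h.
  by move: Lad; rewrite (h vbdp) -Eab -/p -uadp ltxx.
by move: Nbd; rewrite H eqxx.
Qed.

Theorem lemma19 (R : realType) (VT VS : finType)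
    (zT : VT) (parT : VT -> VT) (zS : VS) (parS : VS -> VS)
    (sigma : VT -> VS) (mu : VT -> vert_or_edge VS)
    (tT : VT -> R) (tS : VS -> R) :
  relaxed_scenario zT parT zS parS sigma mu tT tS ->
  forall a b c d : VT,
    is_leaf zT parT a -> is_leaf zT parT b ->
    is_leaf zT parT c -> is_leaf zT parT d ->
    induced_P4_eq zT parT zS parS sigma tT tS a b c d ->
    ((gedge zT parT zS parS sigma tT tS GLt a d /\
      gedge zT parT zS parS sigma tT tS GGt a c /\
      gedge zT parT zS parS sigma tT tS GGt b d) \/
     (gedge zT parT zS parS sigma tT tS GGt a d /\
      gedge zT parT zS parS sigma tT tS GLt a c /\
      gedge zT parT zS parS sigma tT tS GLt b d)) /\
    rainbow zT parT zS parS sigma tT tS a b d /\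
    rainbow zT parT zS parS sigma tT tS a c d.
Proof.
move=> [[_ HrT _ _] [[_ HrS _ _] [HtT [HtS _]]]] a b c d La Lb Lc Ld
  [Hun [Gab Gbc Gcd] [Nac Nbd Nad]].
have nac : a != c by apply: contraTneq Hun => ->; rewrite /= !inE !negb_or eqxx ?andbF /= ?andbF.
have nbd : b != d by apply: contraTneq Hun => ->; rewrite /= !inE !negb_or eqxx ?andbF /= ?andbF.
have nad : a != d by apply: contraTneq Hun => ->; rewrite /= !inE !negb_or eqxx ?andbF /= ?andbF.
pose u x y := tT (lca zT parT x y).
pose v x y := tS (lca zS parS (sigma x) (sigma y)).
have Hu : forall x y w, u x y < u y w -> u x w = u y w.
  move=> x y w; exact: (twice HrT HtT).
have Hv : forall x y w, v x y < v y w -> v x w = v y w.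
  move=> x y w; exact: (twice HrS HtS).
have Su : forall x y, u x y = u y x by move=> x y; exact: (U_sym HrT HtT).
have Sv : forall x y, v x y = v y x by move=> x y; exact: (U_sym HrS HtS).
have Eab : u a b = v a b by move: Gab => /and4P [_ _ _ /eqP].
have Ebc : u b c = v b c by move: Gbc => /and4P [_ _ _ /eqP].
have Ecd : u c d = v c d by move: Gcd => /and4P [_ _ _ /eqP].
have Mac : u a c != v a c by move: Nac; rewrite /gedge La Lc nac.
have Mbd : u b d != v b d by move: Nbd; rewrite /gedge Lb Ld nbd.
have Mad : u a d != v a d by move: Nad; rewrite /gedge La Ld nad.
have D : (u a d < v a d /\ v a c < u a c /\ v b d < u b d) \/
         (v a d < u a d /\ u a c < v a c /\ u b d < v b d).
  case: (ltgtP (u a c) (v a c)) => H.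
  - right; have [h1 h2] := half Hu Hv Su Sv Eab Ebc Ecd Mbd Mad H; by [].
  - left; have Mbd' : v b d != u b d by rewrite eq_sym.
    have Mad' : v a d != u a d by rewrite eq_sym.
    have [h1 h2] := half Hv Hu Sv Su (esym Eab) (esym Ebc) (esym Ecd) Mbd' Mad' H; by [].
  - by move: Mac; rewrite H eqxx.
have G k x y : is_leaf zT parT x -> is_leaf zT parT y -> x != y ->
   cmp_kind k (u x y) (v x y) -> gedge zT parT zS parS sigma tT tS k x y.
  by move=> lx ly nxy h; rewrite /gedge lx ly nxy.
case: D => [[h1 [h2 h3]] | [h1 [h2 h3]]].
- have g1 := G GLt a d La Ld nad h1.
  have g2 := G GGt a c La Lc nac h2.
  have g3 := G GGt b d Lb Ld nbd h3.
  split; first by left.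
  split.
  + by exists GEq, GGt, GLt.
  + by exists GGt, GEq, GLt.
- have g1 := G GGt a d La Ld nad h1.
  have g2 := G GLt a c La Lc nac h2.
  have g3 := G GLt b d Lb Ld nbd h3.
  split; first by right.
  split.
  + by exists GEq, GLt, GGt.
  + by exists GLt, GEq, GGt.
Qed.
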